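(* Let $(G,\cdot)$ be a loop with identity $e$ and let $(H,\cdot)$ be a non-trivial subloop of $G$ such that $(xs\cdot z)s=x(sz\cdot s)$ for all $x,z\in G$ and $s\in H$. Then $$xs^n=xs^{n-1}\cdot s=xs\cdot s^{n-1}$$ for all $x\in G$, $s\in H$ and $n\in\mathbb{Z}$.
   Context: Juxtaposition binds more tightly than $\cdot$. For $s\in H$, the left and right inverses of $s$ coincide under the hypothesis; denote this common inverse by $s^{-1}$ (so $ss^{-1}=s^{-1}s=e$). Powers of $s\in H$ are defined by $s^0=e$, $s^n=s^{n-1}\cdot s$ for $n>0$, and $s^n=(s^{-1})^{|n|}$ for $n<0$. *)

(* Defs.v *)
From Stdlib Require Import ZArith.

(* A loop (G, mul) with identity e, given equationally (Evans):
   ldiv a b is the unique x with a*x = b, rdiv b a the unique y with y*a = b. *)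
Record is_loop {G : Type} (mul ldiv rdiv : G -> G -> G) (e : G) : Prop := {
  loop_ldivK : forall a b, mul a (ldiv a b) = b;
  loop_mulKl : forall a b, ldiv a (mul a b) = b;
  loop_rdivK : forall a b, mul (rdiv b a) a = b;
  loop_mulKr : forall a b, rdiv (mul b a) a = b;
  loop_mul1l : forall a, mul e a = a;
  loop_mul1r : forall a, mul a e = a
}.

Record is_subloop {G : Type} (mul ldiv rdiv : G -> G -> G) (e : G) (H : G -> Prop) : Prop := {
  sub_e : H e;
  sub_mul : forall a b, H a -> H b -> H (mul a b);
  sub_ldiv : forall a b, H a -> H b -> H (ldiv a b);
  sub_rdiv : forall a b, H a -> H b -> H (rdiv a b)
}.

(* Inverse of s: the (right) inverse s \ e, i.e. s * s^{-1} = e.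
   Under the hypotheses of the theorem left and right inverses coincide. *)
Definition loop_inv {G : Type} (ldiv : G -> G -> G) (e s : G) : G := ldiv s e.

Fixpoint loop_npow {G : Type} (mul : G -> G -> G) (e s : G) (n : nat) : G :=
  match n with
  | O => e
  | S k => mul (loop_npow mul e s k) s
  end.

Definition loop_zpow {G : Type} (mul ldiv : G -> G -> G) (e s : G) (n : Z) : G :=
  match n with
  | Z0 => e
  | Zpos p => loop_npow mul e s (Pos.to_nat p)
  | Zneg p => loop_npow mul e (loop_inv ldiv e s) (Pos.to_nat p)
  end.

(* Main.v *)
Require Import Defs.
From Stdlib Require Import ZArith Lia.

Section S.
Variables (G : Type) (mul ldiv rdiv : G -> G -> G) (e : G) (H : G -> Prop).
Hypothesis HG : is_loop mul ldiv rdiv e.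
Hypothesis HH : is_subloop mul ldiv rdiv e H.
Hypothesis Hid : forall x z s, H s -> mul (mul (mul x s) z) s = mul x (mul (mul s z) s).

Lemma rcancel a b c : mul a c = mul b c -> a = b.
Proof. intro E. rewrite <- (loop_mulKr _ _ _ _ HG c a), <- (loop_mulKr _ _ _ _ HG c b), E. reflexivity. Qed.

Lemma inv1 x s : H s -> mul (mul x s) (ldiv s e) = x.
Proof.
  intro Hs. apply (rcancel _ _ s). rewrite Hid by exact Hs.
  rewrite (loop_ldivK _ _ _ _ HG), (loop_mul1l _ _ _ _ HG). reflexivity.
Qed.

Lemma inv2 x s : H s -> mul (mul x (ldiv s e)) s = x.
Proof.
  intro Hs. rewrite <- (loop_rdivK _ _ _ _ HG s x) at 1.
  rewrite inv1 by exact Hs. apply (loop_rdivK _ _ _ _ HG).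
Qed.

Lemma npowP s (Hs : H s) n : forall x,
  mul x (loop_npow mul e s (S n)) = mul (mul x (loop_npow mul e s n)) s /\
  mul x (loop_npow mul e s (S n)) = mul (mul x s) (loop_npow mul e s n).
Proof.
  induction n as [|n IH]; intro x; simpl.
  - rewrite !(loop_mul1l _ _ _ _ HG), !(loop_mul1r _ _ _ _ HG). split; reflexivity.
  - assert (E1 : mul s (loop_npow mul e s n) = loop_npow mul e s (S n)).
    { destruct (IH e) as [_ B]. rewrite (loop_mul1l _ _ _ _ HG) in B.
      rewrite (loop_mul1l _ _ _ _ HG) in B. symmetry; exact B. }
    assert (A : mul x (mul (mul (loop_npow mul e s n) s) s)
              = mul (mul x (mul (loop_npow mul e s n) s)) s).
    { change (mul (loop_npow mul e s n) s) with (loop_npow mul e s (S n)).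
      transitivity (mul x (mul (mul s (loop_npow mul e s n)) s)).
      { rewrite E1. reflexivity. }
      rewrite <- Hid by exact Hs.
      destruct (IH x) as [_ B]. rewrite B. reflexivity. }
    split; [exact A|].
    rewrite A. destruct (IH (mul x s)) as [B _].
    change (mul (loop_npow mul e s n) s) with (loop_npow mul e s (S n)).
    rewrite B. destruct (IH x) as [_ C]. rewrite C. reflexivity.
Qed.

Lemma zpow_pos s m : loop_zpow mul ldiv e s (Z.of_nat m) = loop_npow mul e s m.
Proof. destruct m; simpl; [reflexivity|]. rewrite SuccNat2Pos.id_succ. reflexivity. Qed.

Lemma zpow_neg s m : loop_zpow mul ldiv e s (- Z.of_nat m) = loop_npow mul e (loop_inv ldiv e s) m.
Proof. destruct m; simpl; [reflexivity|]. rewrite SuccNat2Pos.id_succ. reflexivity. Qed.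

End S.

Theorem theorem3p2 (G : Type) (mul ldiv rdiv : G -> G -> G) (e : G) (H : G -> Prop)
  (HG : is_loop mul ldiv rdiv e)
  (HH : is_subloop mul ldiv rdiv e H)
  (Hnontriv : exists h, H h /\ h <> e)
  (Hid : forall x z s, H s -> mul (mul (mul x s) z) s = mul x (mul (mul s z) s)) :
  forall x s (n : Z), H s ->
    mul x (loop_zpow mul ldiv e s n) = mul (mul x (loop_zpow mul ldiv e s (n - 1))) s /\
    mul x (loop_zpow mul ldiv e s n) = mul (mul x s) (loop_zpow mul ldiv e s (n - 1)).
Proof.
  intros x s n Hs.
  destruct (Z_lt_le_dec 0 n) as [Hn|Hn].
  - destruct (Z.to_nat n) as [|m] eqn:Em; [lia|].
    replace n with (Z.of_nat (S m)) by lia.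
    replace (Z.of_nat (S m) - 1)%Z with (Z.of_nat m) by lia.
    rewrite !zpow_pos. apply (npowP G mul ldiv rdiv e H HG Hid s Hs).
  - set (m := Z.to_nat (- n)).
    replace n with (- Z.of_nat m)%Z by lia.
    replace (- Z.of_nat m - 1)%Z with (- Z.of_nat (S m))%Z by lia.
    rewrite !zpow_neg. unfold loop_inv.
    assert (Ht : H (ldiv s e)) by (apply (sub_ldiv _ _ _ _ _ HH); auto; apply (sub_e _ _ _ _ _ HH)).
    destruct (npowP G mul ldiv rdiv e H HG Hid _ Ht m x) as [A _].
    destruct (npowP G mul ldiv rdiv e H HG Hid _ Ht m (mul x s)) as [_ B].
    rewrite A, B. rewrite (inv2 G mul ldiv rdiv e H HG Hid) by exact Hs.
    rewrite (inv1 G mul ldiv rdiv e H HG Hid) by exact Hs. split; reflexivity.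
Qed.
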